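(* Let $L\ge1$, $k\ge1$ be integers with $k\mid L$, let $N$ be an $L$-bit integer, $a<N$ a positive integer with $\gcd(a,N)=1$, $r$ the order of $a$ modulo $N$, $\epsilon>0$, and let $p=\lceil\log_2(2+\frac{k}{2\epsilon})\rceil$, $l_k=(k-1)\frac Lk+1$, $t_k=2L+2-l_k+p$. Let $s_0\in\{0,1,\dots,r-1\}$ be such that $2^{l_k+1}\cdot\frac{s_0}{r}$ is not an integer, and let $m_k$ be a $t_k$-bit string with $$d_{t_k}\Big(m_k,\big(\tfrac{s_0}{r}\big)_{\{l_k,2L+1+p\}}\Big)<2^p.$$ Then $(m_k)_{[1,2]}=\big(\frac{s_0}{r}\big)_{\{l_k,l_k+1\}}$ and $\big|m_k-\big(\frac{s_0}{r}\big)_{\{l_k,2L+1+p\}}\big|<2^p$.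
   Context: Bit strings are identified with the binary integers they represent (most significant bit first). For a bit string $x=x_1\cdots x_n$, $x_{[i,j]}=x_i\cdots x_j$. For real $\omega$ with binary fractional expansion $0.b_1b_2\cdots$ (not ending in infinitely many 1's), $\omega_{\{i,j\}}=b_i\cdots b_j$. For two $t$-bit strings $x,y$, $d_t(x,y)=\min(|x-y|,2^t-|x-y|)$. *)

(* Defs.v *)
From HB Require Import structures.
From mathcomp Require Import all_boot all_order all_algebra.
From mathcomp Require Import all_classical all_reals all_analysis.
Set Implicit Arguments. Unset Strict Implicit. Unset Printing Implicit Defensive.
Import Order.TTheory GRing.Theory Num.Theory.

(* omega_{i,j} for omega = s/r with 0 <= s < r: the integer whose binary digits
   are the bits b_i ... b_j of the (standard, non-terminating-in-1s) binary
   expansion 0.b_1 b_2 ... of s/r, i.e. floor(2^j * s/r) mod 2^(j-i+1). *)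
Definition frac_bits (s r i j : nat) : nat :=
  (s * 2 ^ j %/ r) %% 2 ^ (j.+1 - i).

Definition top2 (t x : nat) : nat := x %/ 2 ^ (t - 2).

Definition dist_t (t x y : nat) : int :=
  (Num.min `|x%:Z - y%:Z| ((2 ^ t)%:Z - `|x%:Z - y%:Z|))%R.

Definition is_order (a N r : nat) : Prop :=
  (0 < r)%N /\ a ^ r = 1 %[mod N] /\
  (forall r', (0 < r')%N -> a ^ r' = 1 %[mod N] -> (r <= r')%N).

(* Main.v *)
Require Import Defs.
From HB Require Import structures.
From mathcomp Require Import all_boot all_order all_algebra.
From mathcomp Require Import all_classical all_reals all_analysis.
From mathcomp Require Import all_solvable zify.
Import Order.TTheory GRing.Theory Num.Theory.

Lemma totient_leq n : (totient n <= n)%N.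
Proof.
rewrite totient_count_coprime.
apply: (@leq_trans (\sum_(0 <= d < n) 1)); last by rewrite sum_nat_const_nat muln1 subn0.
by apply: leq_sum => i _; apply: leq_b1.
Qed.

Lemma auxA c r E P : (c < r)%N -> (P * r < E)%N -> (c * E < (E - P) * r)%N.
Proof. move=> h1 h2. have h3 : (c * E <= (r-1) * E)%N by rewrite leq_mul2r; lia. nia. Qed.
Lemma auxB Q E z P m : (Q < 4)%N -> (m < 4 * E)%N -> (P <= z)%N -> (z + P < E)%N ->
  (`|(m%:Z - (Q * E + z)%N%:Z)| < P%:Z)%R \/ ((4 * E)%:Z - `|(m%:Z - (Q * E + z)%N%:Z)| < P%:Z)%R ->
  (`|(m%:Z - (Q * E + z)%N%:Z)| < P%:Z)%R.
Proof. move=> h1 h2 h3 h4 [//|h]. have : (Q*E <= 3 * E)%N by rewrite leq_mul2r; lia. lia. Qed.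
Lemma auxC Q E z P m : (0 < E)%N -> (Q < 4)%N -> (P <= z)%N -> (z + P < E)%N ->
  (`|(m%:Z - (Q * E + z)%N%:Z)| < P%:Z)%R -> (m %/ E = Q)%N.
Proof. move=> h0 h1 h3 h4 h. apply/eqP; rewrite eqn_leq; apply/andP; split.
  rewrite -ltnS ltn_divLR //. rewrite mulSn. lia.
rewrite leq_divRL //; lia. Qed.
Lemma auxD Q E z : (Q < 4)%N -> (z < E)%N -> (Q * E + z < 4 * E)%N.
Proof. move=> h1 h2. have : (Q*E <= 3 * E)%N by rewrite leq_mul2r; lia. lia. Qed.

Theorem lemma3 (R : realType) (L k N a r : nat) (eps : R) (p s0 m : nat) :
  (1 <= L)%N -> (1 <= k)%N -> (k %| L)%N ->
  (2 ^ L.-1 <= N < 2 ^ L)%N ->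
  (0 < a)%N -> (a < N)%N -> coprime a N ->
  is_order a N r ->
  (0 < eps)%R ->
  (p%:Z = Num.ceil (ln (2 + k%:R / (2 * eps)) / ln 2))%R ->
  let lk := ((k - 1) * (L %/ k)).+1 in
  let tk := (2 * L + 2 - lk + p)%N in
  (s0 < r)%N ->
  ((2 ^+ lk.+1 * s0%:R / r%:R : R) \notin Num.int)%R ->
  (m < 2 ^ tk)%N ->
  (dist_t tk m (frac_bits s0 r lk (2 * L + 1 + p)) < (2 ^ p)%:Z)%R ->
  top2 tk m = frac_bits s0 r lk lk.+1 /\
  (`|(m%:Z - (frac_bits s0 r lk (2 * L + 1 + p))%:Z)| < (2 ^ p)%:Z)%R.
Proof.
move=> hL hk hkL /andP[hN1 hN2] ha0 haN hco [hr0 [_ hrmin]] _ _ lk tk hs0 hnint hm hd.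
have hN0 : (0 < N)%N by lia.
have hrN : (r <= N)%N.
  apply: leq_trans (totient_leq N).
  apply: hrmin; first by rewrite totient_gt0.
  exact: Euler_exp_totient.
have hr : (r < 2 ^ L)%N by lia.
have hlk : (lk <= L)%N.
  rewrite /lk; have := divnK hkL; set q := L %/ k => hq.
  have : (1 <= q)%N by nia.
  nia.
set e := (2 * L + p - lk)%N.
have htk : tk = e.+2 by rewrite /tk /e; lia.
have hj : (2 * L + 1 + p = lk.+1 + e)%N by rewrite /e; lia.
set A := (s0 * 2 ^ lk.+1)%N.
have hnd : ~~ (r %| A)%N.
  apply: contra hnint => /dvdnP [n hn].
  have -> : ((2 ^+ lk.+1 * s0%:R / r%:R : R) = n%:R)%R.
    have -> : ((2 ^+ lk.+1 * s0%:R : R) = A%:R)%R by rewrite /A natrM natrX mulrC.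
    rewrite hn natrM mulfK //.
    by rewrite pnatr_eq0 -lt0n.
  exact: natr_int.
set qq := (A %/ r)%N.
set c := (A %% r)%N.
have hc0 : (0 < c)%N by rewrite lt0n /c -/(dvdn r A).
have hcr : (c < r)%N by rewrite /c ltn_mod.
have hA : A = (qq * r + c)%N by rewrite /qq /c -divn_eq.
set z := (c * 2 ^ e %/ r)%N.
have hpe : (2 ^ p * r < 2 ^ e)%N.
  apply: (@leq_trans (2 ^ p * 2 ^ L)); first by rewrite ltn_pmul2l ?expn_gt0.
  by rewrite -expnD leq_pexp2l //; rewrite /e; lia.
have hz1 : (2 ^ p <= z)%N.
  rewrite /z leq_divRL //.
  apply: (@leq_trans (2 ^ e)); first by lia.
  by rewrite leq_pmull.
have hz2 : (z + 2 ^ p < 2 ^ e)%N.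
  have : (z < 2 ^ e - 2 ^ p)%N.
    rewrite /z ltn_divLR //.
    exact: auxA.
  lia.
have hfb : frac_bits s0 r lk (2 * L + 1 + p) = ((qq %% 4) * 2 ^ e + z)%N.
  rewrite /frac_bits hj.
  have -> : ((lk.+1 + e).+1 - lk = e.+2)%N by lia.
  rewrite expnD mulnA -/A hA mulnDl -mulnA (mulnC r) mulnA divnMDl //.
  rewrite -/z {1}(divn_eq qq 4) mulnDl.
  have -> : (2 ^ e.+2 = 4 * 2 ^ e)%N by rewrite !expnS mulnA.
  rewrite -(mulnA (qq %/ 4)) -addnA modnMDl modn_small //.
  apply: auxD; first by rewrite ltn_mod.
  lia.
have hfb2 : frac_bits s0 r lk lk.+1 = (qq %% 4)%N.
  rewrite /frac_bits -/A.
  by have -> : (lk.+2 - lk = 2)%N by lia.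
rewrite hfb hfb2.
have hq4 : (qq %% 4 < 4)%N by rewrite ltn_mod.
move: hd; rewrite /dist_t hfb gt_min => hd.
have hm' : (m < 4 * 2 ^ e)%N by move: hm; rewrite htk !expnS mulnA.
have hE : (0 < 2 ^ e)%N by rewrite expn_gt0.
have hE4 : (2 ^ tk = 4 * 2 ^ e)%N by rewrite htk !expnS mulnA.
rewrite hE4 in hd.
have habs := auxB _ _ _ _ _ hq4 hm' hz1 hz2 (orP hd).
split=> //.
rewrite /top2 htk.
have -> : (e.+2 - 2 = e)%N by lia.
exact: (auxC _ _ _ _ _ hE hq4 hz1 hz2 habs).
Qed.
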